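(* Let $\mathbb{F}\in\{\mathbb{R},\mathbb{C}\}$, $A\in\mathbb{F}^{m\times n}$, $b\in\mathbb{F}^m$, $\mu>0$, and let $N\ge1$ be an integer with $\beta_N>0$. Let $x'$ be a stationary point of $\mathcal{K}_{reg}$, set $z'=(I-A^*A)x'+A^*b$, and assume that $$|z'_i|\notin\Big[\beta_N^2\sqrt{\mu},\ \frac{\sqrt{\mu}}{\beta_N^2}\Big]\quad\text{for all }i\in\{1,\dots,n\}$$ (this condition is automatically fulfilled if $\beta_N>1$, the interval then being empty). If $x''\neq x'$ is another stationary point of $\mathcal{K}_{reg}$, then $\mathrm{card}(x''-x')>N$.
   Context: $\mathrm{card}(x)$ is the number of nonzero entries; $\beta_k=\inf\{\|Ax\|_2/\|x\|_2:x\ne0,\ \mathrm{card}(x)\le k\}$. $\mathcal{K}_{reg}(x)=\mathcal{Q}_2(\mu\,\mathrm{card})(x)+\|Ax-b\|_2^2$ with $\mathcal{Q}_2(\mu\,\mathrm{card})(x)=\sum_{j=1}^n\big(\mu-(\max\{\sqrt{\mu}-|x_j|,0\})^2\big)$. $A^*$ is the conjugate transpose, $\langle x,y\rangle=\sum_i x_i\overline{y_i}$. A stationary point of a function $g$ is a point $x$ with $0$ in the Fréchet subdifferential $\hat\partial g(x)$, i.e. the set of $v$ with $\liminf_{y\to x,y\ne x}(g(y)-g(x)-\mathrm{Re}\langle v,y-x\rangle)/\|y-x\|\ge0$. *)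

(* Defs.v *)
From HB Require Import structures.
From mathcomp Require Import all_boot all_order all_algebra.
From mathcomp Require Import classical_sets reals.
From mathcomp.real_closed Require Import complex.
Set Implicit Arguments. Unset Strict Implicit. Unset Printing Implicit Defensive.
Import Order.TTheory GRing.Theory Num.Theory.
Local Open Scope ring_scope.
Local Open Scope classical_set_scope.

Record scalar_field (R : realType) := ScalarField {
  sc_type :> comNzRingType;
  sc_abs  : sc_type -> R;
  sc_re   : sc_type -> R;
  sc_conj : sc_type -> sc_type }.

Definition realF (R : realType) : scalar_field R :=
  @ScalarField R R (fun x => `|x|) (fun x => x) (fun x => x).

Definition complexF (R : realType) : scalar_field R :=
  @ScalarField R (complex.complex R : comNzRingType)
    (fun z => Num.sqrt (complex.Re z ^+ 2 + complex.Im z ^+ 2))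
    (fun z => complex.Re z) (@complex.conjc R).

Section Defs.
Variables (R : realType) (F : scalar_field R).

Definition card_nz (n : nat) (x : 'cV[F]_n) : nat := #|[set i | x i 0 != 0]|.

Definition norm2 (n : nat) (x : 'cV[F]_n) : R :=
  Num.sqrt (\sum_i (sc_abs (x i 0)) ^+ 2).

Definition inner (n : nat) (x y : 'cV[F]_n) : F :=
  \sum_i x i 0 * sc_conj (y i 0).

Definition adjoint (m n : nat) (A : 'M[F]_(m, n)) : 'M[F]_(n, m) :=
  map_mx (@sc_conj R F) A^T.

Definition beta (m n : nat) (A : 'M[F]_(m, n)) (k : nat) : R :=
  inf [set r : R | exists x : 'cV[F]_n,
         [/\ x != 0, (card_nz x <= k)%N & r = norm2 (A *m x) / norm2 x]].

Definition Q2_card (n : nat) (mu : R) (x : 'cV[F]_n) : R :=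
  \sum_j (mu - (Num.max (Num.sqrt mu - sc_abs (x j 0)) 0) ^+ 2).

Definition Kreg (m n : nat) (A : 'M[F]_(m, n)) (b : 'cV[F]_m) (mu : R)
  (x : 'cV[F]_n) : R :=
  Q2_card mu x + (norm2 (A *m x - b)) ^+ 2.

(* Frechet subdifferential: v is in \hat\partial g(x) iff
   liminf_{y -> x, y <> x} (g y - g x - Re <v, y - x>) / ||y - x|| >= 0,
   written out with epsilon/delta. *)
Definition frechet_subgrad (n : nat) (g : 'cV[F]_n -> R) (x v : 'cV[F]_n) : Prop :=
  forall eps : R, 0 < eps -> exists2 delta : R, 0 < delta &
    forall y : 'cV[F]_n, y != x -> norm2 (y - x) < delta ->
      - eps <= (g y - g x - sc_re (inner v (y - x))) / norm2 (y - x).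

Definition stationary (n : nat) (g : 'cV[F]_n -> R) (x : 'cV[F]_n) : Prop :=
  frechet_subgrad g x 0.

End Defs.

(* Main.v *)
Require Import Defs.
From HB Require Import structures.
From mathcomp Require Import all_boot all_order all_algebra.
From mathcomp Require Import classical_sets reals.
From mathcomp.real_closed Require Import complex.
From mathcomp Require Import ring lra.
Import Order.TTheory GRing.Theory Num.Theory.
Set Implicit Arguments. Unset Strict Implicit. Unset Printing Implicit Defensive.
Local Open Scope ring_scope.
Local Open Scope complex_scope.

Record goodF (R : realType) (F : scalar_field R) := GoodF {
  iota : R -> F;
  iotaD : forall a b, iota (a + b) = iota a + iota b;
  iota1 : iota 1 = 1;
  abs_ge0 : forall x : F, 0 <= sc_abs x;
  abs_eq0 : forall x : F, sc_abs x = 0 -> x = 0;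
  abs0 : sc_abs (0 : F) = 0;
  absM : forall x y : F, sc_abs (x * y) = sc_abs x * sc_abs y;
  absN : forall x : F, sc_abs (- x) = sc_abs x;
  abs_iota : forall r, sc_abs (iota r) = `|r|;
  reD : forall x y : F, sc_re (x + y) = sc_re x + sc_re y;
  re_iota : forall r (x : F), sc_re (iota r * x) = r * sc_re x;
  conjD : forall x y : F, sc_conj (x + y) = sc_conj x + sc_conj y;
  conjM : forall x y : F, sc_conj (x * y) = sc_conj x * sc_conj y;
  conjK : forall x : F, sc_conj (sc_conj x) = x;
  conj_iota : forall r, sc_conj (iota r) = iota r;
  re_conj : forall x : F, sc_re (sc_conj x) = sc_re x;
  re_norm : forall x : F, sc_re (x * sc_conj x) = sc_abs x ^+ 2;
  re_le : forall x : F, sc_re x <= sc_abs x;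
  abs_conj : forall x : F, sc_abs (sc_conj x) = sc_abs x }.

Lemma goodF_real (R : realType) : goodF (realF R).
Proof.
apply: (@GoodF R (realF R) id) => //=.
- by move=> x /eqP; rewrite normr_eq0 => /eqP.
- by rewrite normr0.
- by move=> x y; rewrite normrM.
- by move=> x; rewrite normrN.
- by move=> x; rewrite real_normK // num_real.
- by move=> x; rewrite ler_norm.
Qed.

Lemma goodF_complex (R : realType) : goodF (complexF R).
Proof.
apply: (@GoodF R (complexF R) (fun r => (r%:C)%C)) => /=.
- by move=> a b; rewrite rmorphD.
- by [].
- by move=> x; apply: sqrtr_ge0.
- by move=> [a b] /= h; apply: (@Normc.eq0_normc R); exact: h.
- by rewrite /= expr0n /= addr0 sqrtr0.
- by move=> [a b] [c d]; exact: (@Normc.normcM R (a +i* b)%C (c +i* d)%C).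
- by move=> [a b] /=; rewrite !sqrrN.
- by move=> r /=; rewrite expr0n /= addr0 sqrtr_sqr.
- by move=> [a b] [c d].
- by move=> r [a b] /=; rewrite mul0r subr0.
- by move=> x y; rewrite rmorphD.
- by move=> x y; rewrite rmorphM.
- by move=> x; rewrite complex.conjcK.
- by move=> r; rewrite /= oppr0.
- by move=> [a b].
- move=> [a b] /=; rewrite sqr_sqrtr ?addr_ge0 ?sqr_ge0 //. by rewrite mulrN opprK !expr2.
- move=> [a b] /=. apply: le_trans (ler_norm a) _. rewrite -sqrtr_sqr ler_sqrt ?addr_ge0 ?sqr_ge0 //.
  by rewrite lerDl sqr_ge0.
- by move=> [a b] /=; rewrite sqrrN.
Qed.

Lemma R2 (R : realFieldType) (a e B M z : R) : 0 < a -> 0 < e -> 0 < B ->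
  e <= M -> a <= M -> (M = e \/ M = a) -> 0 <= z -> z <= e ->
  (z < B * e \/ e < B * z) -> (1 - B) * a < M - z.
Proof.
move=> a0 e0 B0 eM aM _ z0 ze hz.
have [B1|B1] := lerP B 1.
  have h1 : 0 <= (1 - B) * (M - a) by apply: mulr_ge0; lra.
  have h2 : B * e <= B * M by rewrite ler_pM2l.
  case: hz => hz.
    nra.
  have h3 : B * z <= 1 * z by apply: ler_wpM2r.
  lra.
have h1 : 0 < (B - 1) * a by apply: mulr_gt0; lra.
lra.
Qed.

Lemma R3 (R : realFieldType) (s e B M : R) : 0 < s -> 0 < e -> 0 < B ->
  e <= M -> s <= M -> (M = e \/ M = s) ->
  (M < B * e \/ e < B * M) -> (1 - B) * s < M - e.
Proof.
move=> s0 e0 B0 eM sM HM hz; case: HM => HM; rewrite HM in eM sM hz *.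
  have B1 : 1 < B.
    case: hz => hz; nra.
  have : 0 < (B - 1) * s by apply: mulr_gt0; lra.
  lra.
case: hz => hz; last lra.
have B1 : 1 < B.
  have : e < B * e by lra.
  nra.
have : 0 < (B - 1) * s by apply: mulr_gt0; lra.
lra.
Qed.

Lemma R4 (R : realFieldType) (a s e B Ma Ms ka ks r : R) : 0 < a -> 0 < s -> 0 < e -> 0 < B ->
  1 <= ka -> 1 <= ks -> ka * a = Ma -> ks * s = Ms ->
  e <= Ma -> a <= Ma -> (Ma = e \/ Ma = a) ->
  e <= Ms -> s <= Ms -> (Ms = e \/ Ms = s) ->
  r <= a * s -> 0 < a ^+ 2 + s ^+ 2 - 2 * r ->
  (Ms < B * e \/ e < B * Ms) ->
  (1 - B) * (a ^+ 2 + s ^+ 2 - 2 * r) < ka * a ^+ 2 + ks * s ^+ 2 - (ks + ka) * r.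
Proof.
move=> a0 s0 e0 B0 ka1 ks1 hMa hMs eMa aMa Ma_ eMs sMs Ms_ hr hpos hc.
set p := ka - 1 + B. set q := ks - 1 + B.
set d := a * s - r.
have d0 : 0 <= d by rewrite /d subr_ge0.
have E : ka * a ^+ 2 + ks * s ^+ 2 - (ks + ka) * r - (1 - B) * (a ^+ 2 + s ^+ 2 - 2 * r)
   = (a - s) * ((Ma - (1 - B) * a) - (Ms - (1 - B) * s)) + (p + q) * d.
  by rewrite -hMa -hMs /p /q /d; ring.
have pq : 0 < p + q by rewrite /p /q; lra.
suff key : (a != s) -> 0 < (a - s) * ((Ma - (1 - B) * a) - (Ms - (1 - B) * s)).
  rewrite -subr_gt0 E.
  have [as_|as_] := eqVneq a s.
    have dp : 0 < d.
      move: hpos; rewrite /d as_ !expr2; lra.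
    rewrite as_ subrr mul0r add0r; exact: mulr_gt0.
  have := key as_.
  have : 0 <= (p + q) * d by apply: mulr_ge0; lra.
  lra.
move=> as_.
have sq : 0 < (a - s) ^+ 2 by rewrite exprn_even_gt0 //= subr_eq0.
have [B1|B1] := ltrP 1 B.
  have mono : 0 <= (a - s) * (Ma - Ms).
    case: Ma_ => HMa; case: Ms_ => HMs; rewrite HMa HMs in eMa aMa eMs sMs *; nra.
  have : 0 < (B - 1) * (a - s) ^+ 2 by apply: mulr_gt0; lra.
  rewrite !expr2 in sq * => h.
  nra.
have hBMs : e < B * Ms.
  case: hc => // hc.
  have : B * e <= e by nra.
  lra.
have hs : Ms = s.
  case: Ms_ => // HMs; rewrite HMs in hBMs; nra.
rewrite hs in hBMs eMs *.
case: Ma_ => HMa; rewrite HMa in eMa aMa *.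
  have : e < B * s by [].
  have : B * s <= s by nra.
  have : (1 - B) * a >= 0 by apply: mulr_ge0; lra.
  nra.
rewrite !expr2 in sq *; nra.
Qed.

Lemma max_facts (R : realType) (x y : R) :
  [/\ x <= Num.max x y, y <= Num.max x y & (Num.max x y = x \/ Num.max x y = y)].
Proof.
rewrite /Num.max; case: (ltP x y) => h; split => //; try by [right|left].
exact: ltW.
Qed.

Section Gen.
Variables (R : realType) (F : scalar_field R) (G : goodF F).
Local Notation ab := (@sc_abs R F).
Local Notation re := (@sc_re R F).
Local Notation cj := (@sc_conj R F).
Local Notation io := (iota G).
Implicit Types x y z s t : F.

Lemma re0 : re 0 = 0.
Proof. have h := (reD G) 0 0; rewrite addr0 in h; by apply: (addrI (re 0)); rewrite addr0 -h. Qed.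

Lemma reN x : re (- x) = - re x.
Proof. by apply: (addrI (re x)); rewrite -(reD G) [x - x]subrr subrr re0. Qed.

Lemma reB x y : re (x - y) = re x - re y.
Proof. by rewrite (reD G) reN. Qed.

Lemma cj0 : cj 0 = 0.
Proof. have h := (conjD G) 0 0; rewrite addr0 in h; by apply: (addrI (cj 0)); rewrite addr0 -h. Qed.

Lemma cjN x : cj (- x) = - cj x.
Proof. by apply: (addrI (cj x)); rewrite -(conjD G) !addrN cj0. Qed.

Lemma cjB x y : cj (x - y) = cj x - cj y.
Proof. by rewrite (conjD G) cjN. Qed.

Lemma re_sum (I : finType) (f : I -> F) : re (\sum_i f i) = \sum_i re (f i).
Proof. exact: (big_morph _ ((reD G)) re0). Qed.

Lemma cj_sum (I : finType) (f : I -> F) : cj (\sum_i f i) = \sum_i cj (f i).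
Proof. exact: (big_morph _ ((conjD G)) cj0). Qed.

Lemma re_swap x y : re (x * cj y) = re (y * cj x).
Proof. by rewrite -(re_conj G) (conjM G) (conjK G) mulrC. Qed.

Lemma re_ioM k x y : re (x * (io k * y)) = k * re (x * y).
Proof. by rewrite mulrCA (re_iota G). Qed.

Lemma abs_sqD x y : ab (x + y) ^+ 2 = ab x ^+ 2 + 2 * re (y * cj x) + ab y ^+ 2.
Proof.
rewrite -(re_norm G) (conjD G) mulrDl !mulrDr !(reD G) !(re_norm G) (re_swap x y); ring.
Qed.

Lemma re_mul_le x y : re (x * cj y) <= ab x * ab y.
Proof. by rewrite -((abs_conj G) y) -(absM G) (re_le G). Qed.

Lemma abs_io k x : ab (io k * x) = `|k| * ab x.
Proof. by rewrite (absM G) (abs_iota G). Qed.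

Lemma abs_gt0 x : x != 0 -> 0 < ab x.
Proof.
move=> hx; rewrite lt_neqAle (abs_ge0 G) andbT; apply/eqP => h.
by move/eqP: hx; apply; apply: ((abs_eq0 G)); rewrite h.
Qed.

Definition statC (mu : R) x z :=
  (x = 0 /\ ab z <= Num.sqrt mu) \/
  (x != 0 /\ exists k, [/\ 1 <= k, k * ab x = Num.max (Num.sqrt mu) (ab x) & z = io k * x]).

Lemma coord_ineq (mu B : R) s zs t zt : 0 < mu -> 0 < B ->
  statC mu s zs -> statC mu t zt ->
  (ab zs < B * Num.sqrt mu \/ Num.sqrt mu < B * ab zs) -> t != s ->
  (1 - B) * ab (t - s) ^+ 2 < re ((t - s) * cj (zt - zs)).
Proof.
move=> mu0 B0 hs ht hc ts.
have e0 : 0 < Num.sqrt mu by rewrite sqrtr_gt0.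
set e := Num.sqrt mu in e0 hs ht hc *.
case: hs => [[s0 hzs]|[s0 [ks [ks1 hks hE]]]]; last subst zs.
  case: ht => [[t0 _]|[t0 [kt [kt1 hkt hE]]]]; last subst zt.
    by move: ts; rewrite s0 t0 eqxx.
  rewrite s0 subr0 cjB (conjM G) (conj_iota G) mulrBr reB re_ioM (re_norm G).
  have a0 := abs_gt0 t0.
  have hr := re_mul_le t zs.
  have z0 := (abs_ge0 G) zs.
  have [h1 h2 h3] := max_facts e (ab t).
  have := R2 a0 e0 B0 h1 h2 h3 z0 hzs hc.
  rewrite -hkt => h.
  have : (1 - B) * ab t * ab t < (kt * ab t - ab zs) * ab t by rewrite ltr_pM2r.
  rewrite !expr2; nra.
have s0' := abs_gt0 s0.
have hzs : ab (io ks * s) = ks * ab s by rewrite abs_io ger0_norm //; lra.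
rewrite hzs in hc.
have [h1 h2 h3] := max_facts e (ab s).
rewrite -hks in h1 h2 h3.
case: ht => [[t0 hzt]|[t0 [kt [kt1 hkt hE']]]]; last subst zt.
  rewrite t0 sub0r (absN G) cjB (conjM G) (conj_iota G) mulrBr reB mulNr reN mulNr reN re_ioM (re_norm G).
  have hr := re_mul_le s zt.
  have := R3 s0' e0 B0 h1 h2 h3 hc => h.
  have : (1 - B) * ab s * ab s < (ks * ab s - e) * ab s by rewrite ltr_pM2r.
  have : ab s * ab zt <= ab s * e by rewrite ler_pM2l.
  rewrite !expr2; nra.
have a0 := abs_gt0 t0.
have [g1 g2 g3] := max_facts e (ab t).
rewrite -hkt in g1 g2 g3.
have hr := re_mul_le s t.
have hpos : 0 < ab (t - s) ^+ 2.
  by rewrite exprn_gt0 // abs_gt0 // subr_eq0.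
have hsq := abs_sqD t (- s).
rewrite (absN G) mulNr reN in hsq.
have Ex : re ((t - s) * cj (io kt * t - io ks * s)) =
    kt * ab t ^+ 2 + ks * ab s ^+ 2 - (ks + kt) * re (s * cj t).
  rewrite cjB !(conjM G) !(conj_iota G) mulrBl !mulrBr !reB !re_ioM !(re_norm G) (re_swap t s).
  ring.
rewrite Ex hsq.
rewrite hsq in hpos.
rewrite [ab s * _]mulrC in hr.
have := R4 a0 s0' e0 B0 kt1 ks1 (erefl _) (erefl _) g1 g2 g3 h1 h2 h3 hr _ hc.
have -> : ab t ^+ 2 + 2 * - re (s * cj t) + ab s ^+ 2 = ab t ^+ 2 + ab s ^+ 2 - 2 * re (s * cj t) by ring.
move=> H; apply: H.
by move: hpos; rewrite mulrN; congr (_ < _); ring.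
Qed.

End Gen.

Local Close Scope complex_scope.


Lemma lim_lem (R : realType) (al rho K : R) : 0 < rho -> 0 <= K ->
  (forall eps, 0 < eps -> exists2 d, 0 < d & forall T, 0 < T -> T < d ->
     - eps * T <= al * T - 2 * T * rho + T ^+ 2 * K) -> 2 * rho <= al.
Proof.
move=> r0 K0 H; rewrite leNgt; apply/negP => hal.
pose eps := (2 * rho - al) / 2.
have e0 : 0 < eps by rewrite /eps divr_gt0 // subr_gt0.
have [d d0 Hd] := H eps e0.
pose D := 2 * eps + d * K + 1.
have D0 : 0 < D by rewrite /D; have := mulr_ge0 (ltW d0) K0; lra.
pose T := eps * d / D.
have T0 : 0 < T by rewrite /T divr_gt0 // mulr_gt0.
have TD : T * D = eps * d by rewrite /T mulrVK // unitfE gt_eqF.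
have Td : T < d.
  rewrite -(ltr_pM2r D0) TD; rewrite /D; have := mulr_ge0 (ltW d0) K0; nra.
have TK : T * K < eps.
  rewrite -(ltr_pM2r D0) mulrAC TD /D; have := mulr_ge0 (ltW d0) K0; nra.
have h := Hd T T0 Td.
have hal2 : al = 2 * rho - 2 * eps by rewrite /eps; field.
rewrite hal2 in h.
have : T * (T * K) < T * eps by rewrite ltr_pM2l.
nra.
Qed.

Lemma concave_q (R : realType) (mu e s s' : R) :
  (mu - Num.max (e - s') 0 ^+ 2) - (mu - Num.max (e - s) 0 ^+ 2) <=
  2 * Num.max (e - s) 0 * (s' - s).
Proof.
have [h1 h2 h3] := max_facts (e - s) 0.
have [g1 g2 g3] := max_facts (e - s') 0.
set P := Num.max (e - s) 0 in h1 h2 h3 *.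
set P' := Num.max (e - s') 0 in g1 g2 g3 *.
have q1 := sqr_ge0 (s - s').
case: h3 => h3; case: g3 => g3; rewrite ?h3 ?g3 in h1 h2 g1 g2 *; try nra.

Qed.

Lemma sqrt_step (R : realType) (l s E : R) : 0 <= l -> 0 < s -> l ^+ 2 = s ^+ 2 + E ->
  2 * s * (l - s) <= E.
Proof. move=> l0 s0 h; have : 0 <= (l - s) ^+ 2 by apply: sqr_ge0. nra. Qed.

Section Vec.
Variables (R : realType) (F : scalar_field R) (G : goodF F).
Local Notation ab := (@sc_abs R F).
Local Notation re := (@sc_re R F).
Local Notation cj := (@sc_conj R F).
Local Notation io := (iota G).

Definition ev n (i : 'I_n) (u : F) : 'cV[F]_n := \col_j (if j == i then u else 0).

Lemma norm2_sq n (v : 'cV[F]_n) : norm2 v ^+ 2 = \sum_i ab (v i 0) ^+ 2.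
Proof. by rewrite /norm2 sqr_sqrtr // sumr_ge0 // => i _; rewrite sqr_ge0. Qed.

Lemma norm2_ge0 n (v : 'cV[F]_n) : 0 <= norm2 v.
Proof. exact: sqrtr_ge0. Qed.

Lemma norm2_ev n (i : 'I_n) u : norm2 (ev i u) = ab u.
Proof.
rewrite /norm2 (bigD1 i) //= big1 ?addr0.
  by rewrite mxE eqxx sqrtr_sqr ger0_norm // (abs_ge0 G).
by move=> j /negbTE hj; rewrite mxE hj (abs0 G) expr0n.
Qed.

Lemma ev_neq n (x : 'cV[F]_n) i u : u != 0 -> x + ev i u != x.
Proof.
move=> hu; apply/negP => /eqP h.
have : (x + ev i u) i 0 = x i 0 by rewrite h.
rewrite !mxE eqxx => /eqP; rewrite -subr_eq0 addrAC subrr add0r => /eqP hu0.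
by rewrite hu0 eqxx in hu.
Qed.

Lemma mul_ev m n (A : 'M[F]_(m, n)) i u j : (A *m ev i u) j 0 = A j i * u.
Proof.
rewrite mxE (bigD1 i) //= big1 ?addr0; first by rewrite mxE eqxx.
by move=> k /negbTE hk; rewrite mxE hk mulr0.
Qed.

Definition qterm (mu : R) (v : F) := mu - Num.max (Num.sqrt mu - ab v) 0 ^+ 2.

Lemma Kreg_step m n (A : 'M[F]_(m, n)) b mu x i u :
  Kreg A b mu (x + ev i u) - Kreg A b mu x =
  (qterm mu (x i 0 + u) - qterm mu (x i 0)) +
  2 * re (u * cj ((adjoint A *m (A *m x - b)) i 0)) + ab u ^+ 2 * \sum_j ab (A j i) ^+ 2.
Proof.
rewrite /Kreg !norm2_sq opprD addrACA.
have -> : Q2_card mu (x + ev i u) - Q2_card mu x = qterm mu (x i 0 + u) - qterm mu (x i 0).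
  rewrite /Q2_card -sumrB (bigD1 i) //= big1 ?addr0.
    by rewrite !mxE eqxx.
  by move=> j /negbTE hj; rewrite !mxE hj addr0 subrr.
have E : forall j, ab ((A *m (x + ev i u) - b) j 0) ^+ 2 =
    ab ((A *m x - b) j 0) ^+ 2 + 2 * re (A j i * u * cj ((A *m x - b) j 0)) + ab (A j i) ^+ 2 * ab u ^+ 2.
  move=> j.
  have -> : (A *m (x + ev i u) - b) j 0 = (A *m x - b) j 0 + A j i * u.
    by rewrite mulmxDr addrAC; set P := A *m x - b; rewrite mxE mul_ev.
  by rewrite (abs_sqD G) (absM G) exprMn.
rewrite (eq_bigr _ (fun j _ => E j)) !big_split /=.
have -> : \sum_j 2 * re (A j i * u * cj ((A *m x - b) j 0)) =
    2 * re (u * cj ((adjoint A *m (A *m x - b)) i 0)).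
  rewrite -mulr_sumr; congr (_ * _).
  rewrite mxE (cj_sum G) mulr_sumr (re_sum G); apply: eq_bigr => j _.
  by rewrite !mxE (conjM G) (conjK G) mulrCA mulrA.
rewrite mulr_sumr [\sum_(j < m) ab (A j i) ^+ 2 * _](eq_bigr _ (fun j _ => mulrC _ _)); ring.
Qed.



Lemma frechet_dir m n (A : 'M[F]_(m, n)) b mu x i :
  stationary (Kreg A b mu) x ->
  forall eps, 0 < eps -> exists2 d, 0 < d & forall u, 0 < ab u -> ab u < d ->
   - eps * ab u <= (qterm mu (x i 0 + u) - qterm mu (x i 0)) +
     2 * re (u * cj ((adjoint A *m (A *m x - b)) i 0)) + ab u ^+ 2 * \sum_j ab (A j i) ^+ 2.
Proof.
move=> hst eps e0; have [d d0 hd] := hst eps e0.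
exists d => // u u0 ud.
have un : u != 0 by apply/negP => /eqP hu; rewrite hu (abs0 G) ltxx in u0.
have hy := ev_neq x i un.
have hxy : x + ev i u - x = ev i u by rewrite addrAC subrr add0r.
have := hd _ hy; rewrite hxy norm2_ev => /(_ ud).
have -> : inner 0 (ev i u) = 0 by rewrite /inner big1 // => j _; rewrite mxE mul0r.
rewrite (re0 G) subr0 ler_pdivlMr // Kreg_step.
by [].
Qed.

Lemma stat_coord m n (A : 'M[F]_(m, n)) b mu x : 0 < mu ->
  stationary (Kreg A b mu) x ->
  forall i, statC G mu (x i 0) (((1%:M - adjoint A *m A) *m x + adjoint A *m b) i 0).
Proof.
move=> mu0 hst i.
set g := (adjoint A *m (A *m x - b)) i 0.
set S := \sum_j ab (A j i) ^+ 2.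
have S0 : 0 <= S by rewrite /S sumr_ge0 // => j _; rewrite sqr_ge0.
have hz : ((1%:M - adjoint A *m A) *m x + adjoint A *m b) i 0 = x i 0 - g.
  have -> : (1%:M - adjoint A *m A) *m x + adjoint A *m b = x - adjoint A *m (A *m x - b).
    by rewrite mulmxBl mul1mx mulmxBr -mulmxA opprB addrA [LHS]addrAC.
  by set Y := adjoint A *m _; rewrite mxE [(- Y) i 0]mxE.
rewrite hz.
have hfd := frechet_dir i hst; rewrite -/g -/S in hfd.
have e0 : 0 <= Num.sqrt mu by apply: sqrtr_ge0.
set e := Num.sqrt mu in e0 *.
have mkdir : forall D : F, 0 < ab D -> forall T, 0 < T ->
    ab (io (- (T / ab D)) * D) = T /\ re (io (- (T / ab D)) * D * cj D) = - (T * ab D).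
  move=> D D0 T T0; split.
    by rewrite (abs_io G) normrN ger0_norm ?divr_ge0 ?ltW // divfK // gt_eqF.
  rewrite -mulrA (re_iota G) (re_norm G) expr2 mulrA mulNr divfK ?mulNr //.
  by rewrite gt_eqF.
have [s0|s0] := eqVneq (x i 0) 0.
  left; split => //.
  rewrite s0 sub0r (absN G).
  have [g0|g0] := eqVneq g 0.
    by rewrite g0 (abs0 G).
  have rho0 := abs_gt0 G g0.
  rewrite -/e; suff : 2 * ab g <= 2 * e by lra.
  apply: (lim_lem rho0 S0) => eps eps0.
  have [d d0 hd] := hfd eps eps0.
  exists d => // T T0 Td.
  have [hu hre] := mkdir g rho0 T T0.
  set u := io (- (T / ab g)) * g in hu hre.
  have := hd u; rewrite hu => /(_ T0 Td).
  rewrite hre.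
  have hq := concave_q mu e (ab (x i 0)) (ab (x i 0 + u)).
  rewrite /qterm -/e.
  rewrite s0 add0r (abs0 G) subr0 hu in hq *.
  have -> : Num.max e 0 = e by rewrite /Num.max; case: ltP => //; lra.
  move: hq; have -> : Num.max e 0 = e by rewrite /Num.max; case: ltP => //; lra.
  move=> hq h; nra.
have sg0 := abs_gt0 G s0.
set sg := ab (x i 0) in sg0.
set mm := Num.max (e - sg) 0.
have [m1 m2 m3] := max_facts (e - sg) 0.
rewrite -/mm in m1 m2 m3.
set c := mm / sg.
have c0 : 0 <= c by rewrite /c divr_ge0 // ltW.
set D := io c * x i 0 + g.
have D0 : D = 0.
  apply/eqP; apply/negP => /negP Dn.
  have rho0 := abs_gt0 G Dn.
  have : 2 * ab D <= 0.
    apply: (lim_lem rho0 (addr_ge0 c0 S0)) => eps eps0.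
    have [d d0 hd] := hfd eps eps0.
    exists d => // T T0 Td.
    have [hu hre] := mkdir D rho0 T T0.
    set u := io (- (T / ab D)) * D in hu hre.
    have := hd u; rewrite hu => /(_ T0 Td).
    have hq := concave_q mu e (ab (x i 0)) (ab (x i 0 + u)).
    rewrite /qterm -/e -/sg -/mm.
    move: hq; rewrite -/sg -/mm => hq.
    have hsq := abs_sqD G (x i 0) u.
    rewrite hu -/sg -addrA in hsq.
    have := sqrt_step (abs_ge0 G _) sg0 hsq => hs.
    have hreD : re (u * cj D) = c * re (u * cj (x i 0)) + re (u * cj g).
      by rewrite /D (conjD G) (conjM G) (conj_iota G) mulrDr (reD G) (re_ioM G).
    rewrite hre in hreD.
    have hcs : c * sg = mm by rewrite /c divfK // gt_eqF.
    have : mm * (2 * sg * (ab (x i 0 + u) - sg)) <= mm * (2 * re (u * cj (x i 0)) + T ^+ 2).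
      by rewrite ler_wpM2l.
    rewrite -hcs => hh h.
    nra.
  lra.
have hg : g = - (io c * x i 0) by apply/eqP; rewrite -addr_eq0 addrC -/D D0.
right; split => //.
exists (1 + c); split.
- lra.
- rewrite mulrDl mul1r /c divfK ?gt_eqF // -/sg -/e.
  case: m3 => hm; rewrite hm in m1 m2 *;
    have [k1 k2 k3] := max_facts e sg; case: k3 => hk; rewrite hk in k1 k2 *; lra.
- by rewrite hg opprK (iotaD G) (iota1 G) mulrDl mul1r.
Qed.

End Vec.



Section Main.
Variables (R : realType) (F : scalar_field R) (G : goodF F).
Local Notation ab := (@sc_abs R F).
Local Notation re := (@sc_re R F).
Local Notation cj := (@sc_conj R F).

Lemma sum_ident m n (A : 'M[F]_(m, n)) (w : 'cV[F]_n) :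
  \sum_i re (w i 0 * cj ((w - adjoint A *m (A *m w)) i 0)) =
  norm2 w ^+ 2 - norm2 (A *m w) ^+ 2.
Proof.
have Hs : \sum_i w i 0 * cj ((adjoint A *m (A *m w)) i 0) =
          \sum_j (A *m w) j 0 * cj ((A *m w) j 0).
  under eq_bigr => i _ do rewrite mxE (cj_sum G) mulr_sumr.
  rewrite exchange_big /=; apply: eq_bigr => j _.
  rewrite [X in X * _]mxE mulr_suml; apply: eq_bigr => i _.
  by rewrite !mxE (conjM G) (conjK G) mulrA [w i 0 * _]mulrC.
have E : forall i, re (w i 0 * cj ((w - adjoint A *m (A *m w)) i 0)) =
    ab (w i 0) ^+ 2 - re (w i 0 * cj ((adjoint A *m (A *m w)) i 0)).
  move=> i; set Y := adjoint A *m _.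
  by rewrite mxE [(- Y) i 0]mxE (cjB G) mulrBr (reB G) (re_norm G).
rewrite (eq_bigr _ (fun i _ => E i)) sumrB -(re_sum G) Hs (re_sum G) !norm2_sq.
congr (_ - _); apply: eq_bigr => j _; exact: (re_norm G).
Qed.


Lemma beta_bound m n (A : 'M[F]_(m, n)) N (w : 'cV[F]_n) :
  w != 0 -> (card_nz w <= N)%N -> beta A N <= norm2 (A *m w) / norm2 w.
Proof.
move=> w0 hc.
have HL : has_lbound [set r : R | exists x : 'cV[F]_n,
         [/\ x != 0, (card_nz x <= N)%N & r = norm2 (A *m x) / norm2 x]].
  exists 0 => r [v [_ _ ->]]; apply: divr_ge0; exact: norm2_ge0.
apply: (ge_inf HL); exists w; split => //.
Qed.

Lemma main_gen m n (A : 'M[F]_(m, n)) (b : 'cV[F]_m) (mu : R) (N : nat)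
  (x' x'' : 'cV[F]_n) :
  0 < mu -> 0 < beta A N ->
  stationary (Kreg A b mu) x' ->
  (forall i : 'I_n,
     ~ (beta A N ^+ 2 * Num.sqrt mu <= ab (((1%:M - adjoint A *m A) *m x' + adjoint A *m b) i 0)
        <= Num.sqrt mu / beta A N ^+ 2)) ->
  stationary (Kreg A b mu) x'' -> x'' != x' ->
  (N < card_nz (x'' - x'))%N.
Proof.
move=> mu0 be0 hx' hz hx'' neq.
rewrite ltnNge; apply/negP => hcard.
set w := x'' - x' in hcard.
have w0 : w != 0 by rewrite subr_eq0.
set B := beta A N ^+ 2 in hz.
have B0 : 0 < B by rewrite exprn_gt0.
have [i0 hi0] : exists i0, w i0 0 != 0.
  case: (pickP (fun i => w i 0 != 0)) => [i0 hi0|hall]; first by exists i0.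
  exfalso; move/eqP: w0; apply; apply/matrixP => i j; rewrite (ord1 j) [RHS]mxE.
  by apply/eqP; apply/negPn; rewrite hall.
have nw0 : 0 < norm2 w.
  have : 0 < norm2 w ^+ 2.
    rewrite norm2_sq (bigD1 i0) //=.
    apply: ltr_pwDl; first by rewrite exprn_gt0 // abs_gt0.
    by apply: sumr_ge0 => i _; rewrite sqr_ge0.
  have := norm2_ge0 w; rewrite le_eqVlt => /orP[/eqP <-|//].
  by rewrite expr0n ltxx.
have hb := beta_bound A w0 hcard.
rewrite ler_pdivlMr // in hb.
have hb2 : B * norm2 w ^+ 2 <= norm2 (A *m w) ^+ 2.
  rewrite /B -exprMn; apply: lerXn2r => //.
  - by rewrite nnegrE mulr_ge0 // ?norm2_ge0 // ltW.
  - by rewrite nnegrE norm2_ge0.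
set z' := (1%:M - adjoint A *m A) *m x' + adjoint A *m b in hz.
set z'' := (1%:M - adjoint A *m A) *m x'' + adjoint A *m b.
have hdz : z'' - z' = w - adjoint A *m (A *m w).
  rewrite /z'' /z' /w opprD addrACA subrr addr0 -mulmxBr mulmxBl mul1mx.
  by rewrite mulmxA.
have hsum := sum_ident A w.
rewrite -hdz in hsum.
pose T i := re (w i 0 * cj ((z'' - z') i 0)) - (1 - B) * ab (w i 0) ^+ 2.
have Tpos : forall i, w i 0 != 0 -> 0 < T i.
  move=> i hi; rewrite /T subr_gt0.
  have hw : w i 0 = x'' i 0 - x' i 0 by rewrite mxE [(- x') i 0]mxE.
  have hdz' : (z'' - z') i 0 = z'' i 0 - z' i 0 by rewrite mxE [(- z') i 0]mxE.
  rewrite hw hdz'; apply: (coord_ineq (G:=G) mu0 B0).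
  - exact: (stat_coord G mu0 hx').
  - exact: (stat_coord G mu0 hx'').
  - have := hz i; rewrite -/z'.
    set zz := ab (z' i 0).
    have [h1|h1] := ltP zz (B * Num.sqrt mu); first by left.
    move=> h2; right; have : ~~ (zz <= Num.sqrt mu / B) by apply/negP. 
    by rewrite -ltNge ltr_pdivrMr // mulrC.
  - by rewrite -subr_eq0 -hw.
have Tge : forall i, 0 <= T i.
  move=> i; have [hi|hi] := eqVneq (w i 0) 0; last exact: ltW (Tpos i hi).
  by rewrite /T hi mul0r (re0 G) (abs0 G) expr0n /= mulr0 subrr.
have : 0 < \sum_i T i.
  rewrite (bigD1 i0) //=; apply: ltr_pwDl; first exact: Tpos.
  by apply: sumr_ge0 => i _.
rewrite /T sumrB hsum -mulr_sumr -norm2_sq.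
lra.
Qed.

End Main.

Theorem theorem4p2 (R : realType) (F : scalar_field R)
  (hF : F = realF R \/ F = complexF R)
  (m n : nat) (A : 'M[F]_(m, n)) (b : 'cV[F]_m) (mu : R) (N : nat)
  (x' x'' : 'cV[F]_n) :
  0 < mu -> (1 <= N)%N -> 0 < beta A N ->
  stationary (Kreg A b mu) x' ->
  (forall i : 'I_n,
     let z' := (1%:M - adjoint A *m A) *m x' + adjoint A *m b in
     ~ (beta A N ^+ 2 * Num.sqrt mu <= sc_abs (z' i 0)
        <= Num.sqrt mu / beta A N ^+ 2)) ->
  stationary (Kreg A b mu) x'' -> x'' != x' ->
  (N < card_nz (x'' - x'))%N.
Proof.
move=> mu0 _ be0 hx' hz hx'' neq.
case: hF => hF.
  have G : goodF F by rewrite hF; exact: goodF_real.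
  exact: (main_gen G mu0 be0 hx' hz hx'' neq).
have G : goodF F by rewrite hF; exact: goodF_complex.
exact: (main_gen G mu0 be0 hx' hz hx'' neq).
Qed.
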